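(* Let $\iota:\langle X_0,d_0\rangle\to\langle X_1,d_1\rangle$ be a dense isometry between metric spaces and let $f:\langle X_1,d_1\rangle\to\langle X_2,d_2\rangle$ be a function between metric spaces. Then $f$ is Cauchy-continuous if and only if $f$ is continuous and $f\circ\iota$ is Cauchy-continuous.
   Context: A dense isometry is a distance-preserving map (not necessarily onto) whose image is dense. A function between metric spaces is Cauchy-continuous if it maps Cauchy sequences to Cauchy sequences. *)

(* Defs.v *)
From HB Require Import structures.
From mathcomp Require Import all_boot all_order all_algebra.
From mathcomp Require Import all_classical all_reals all_analysis.
Set Implicit Arguments. Unset Strict Implicit. Unset Printing Implicit Defensive.
Import Order.TTheory GRing.Theory Num.Theory.
Local Open Scope classical_set_scope.
Local Open Scope ring_scope.

Definition isometry {R : realType} {X Y : metricType R} (i : X -> Y) : Prop :=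
  forall x y : X, mdist (i x) (i y) = mdist x y.

Definition dense_isometry {R : realType} {X Y : metricType R} (i : X -> Y) : Prop :=
  isometry i /\ dense (range i).

Definition cauchy_continuous {R : realType} {X Y : metricType R} (f : X -> Y) : Prop :=
  forall u : nat -> X, cauchy (u @ \oo) -> cauchy ((f \o u) @ \oo).

(* Main.v *)
Require Import Defs.
From HB Require Import structures.
From mathcomp Require Import all_boot all_order all_algebra.
From mathcomp Require Import all_classical all_reals all_analysis.
From mathcomp Require Import zify lra ring.
Set Implicit Arguments. Unset Strict Implicit. Unset Printing Implicit Defensive.
Import Order.TTheory GRing.Theory Num.Theory.
Local Open Scope classical_set_scope.
Local Open Scope ring_scope.

Lemma cauchy_seqP (R : realType) (X : metricType R) (u : nat -> X) :
  cauchy (u @ \oo) <-> forall e, 0 < e -> exists N, forall m n, (N <= m)%N -> (N <= n)%N -> mdist (u m) (u n) < e.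
Proof.
rewrite -cauchy_ballP; split.
  move=> H e e0; have := H e e0.
  move=> [[P Q] /= [[N _ NP] [M _ MQ]] PQ].
  exists (maxn N M) => m n Nm Nn.
  have := PQ (u m, u n); rewrite /= ballEmdist /=; apply; split.
  apply: NP; rewrite /=; lia.
  apply: MQ; rewrite /=; lia.
move=> H e e0; have [N HN] := H e e0.
exists ([set x | exists2 m, (N <= m)%N & x = u m], [set x | exists2 m, (N <= m)%N & x = u m]).
  split; exists N => // m /= Nm; by exists m.
move=> [x y] /= [[m Nm ->] [n Nn ->]]; rewrite ballEmdist /=; exact: HN.
Qed.
Import metricType_numDomainType.

Lemma inv_small (R : realType) (e : R) : 0 < e -> exists N, forall n, (N <= n)%N -> n.+1%:R^-1 < e.
Proof. move=> e0; have [N _ HN] := near_infty_natSinv_lt (PosNum e0); by exists N. Qed.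

Lemma tri3 (R : realType) (X : metricType R) (x y z w : X) :
  mdist x w <= mdist x y + mdist y z + mdist z w.
Proof.
apply: le_trans (metric_triangle x z w) _; rewrite lerD2r; exact: metric_triangle.
Qed.

Lemma cc_cont (R : realType) (X1 X2 : metricType R) (f : X1 -> X2) :
  cauchy_continuous f -> continuous f.
Proof.
move=> Hcc p; apply/cvgrPdist_lt => e e0; apply: contrapT => H.
have Hy : forall n : nat, exists y, mdist p y < n.+1%:R^-1 /\ ~ mdist (f p) (f y) < e.
  move=> n; apply: contrapT => /forallNP K; apply: H; apply/nbhs_mdistP.
  exists n.+1%:R^-1; first by rewrite /= invr_gt0 ltr0Sn.
  move=> y /= py.
  by have /not_andP[//|/contrapT] := K y.
have [y Hy'] := choice Hy.
pose w n := if odd n then y n else p.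
have : cauchy ((f \o w) @ \oo).
  apply: Hcc; apply/cauchy_seqP => e' e'0.
  have [N HN] := inv_small (divr_gt0 e'0 (ltr0Sn _ 1)).
  exists N => m n Nm Nn.
  have h : forall k, (N <= k)%N -> mdist (w k) p < e' / 2.
    move=> k Nk; rewrite /w; case: (odd k).
      by rewrite metric_sym; apply: lt_trans (proj1 (Hy' k)) _; apply: HN.
    by rewrite mdistxx divr_gt0.
  rewrite (le_lt_trans (metric_triangle _ p _)) // (splitr e') ltrD //.
    exact: h.
  by rewrite metric_sym; exact: h.
move/cauchy_seqP => /(_ e e0) [N HN].
have := HN N.*2.+1 N.*2; rewrite /= /w /= odd_double /=.
rewrite metric_sym => K; apply: (proj2 (Hy' N.*2.+1)); apply: K.
  by rewrite -addnn; apply: leqW; apply: leq_addr.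
by rewrite -addnn; apply: leq_addr.
Qed.

Theorem lemma4p1 (R : realType) (X0 X1 X2 : metricType R)
  (iota : X0 -> X1) (f : X1 -> X2) :
  dense_isometry iota ->
  (cauchy_continuous f <-> (continuous f /\ cauchy_continuous (f \o iota))).
Proof.
move=> [Hiso Hdense]; split.
  move=> Hcc; split; first exact: cc_cont.
  move=> u /cauchy_seqP Hu; apply: Hcc; apply/cauchy_seqP => e e0.
  have [N HN] := Hu e e0; exists N => m n Nm Nn /=; rewrite Hiso; exact: HN.
move=> [Hc Hcc] u /cauchy_seqP Hu.
have Hv : forall n, exists v : X0, mdist (u n) (iota v) < n.+1%:R^-1 /\
    mdist (f (u n)) (f (iota v)) < n.+1%:R^-1.
  move=> n; set d := n.+1%:R^-1 : R.
  have d0 : 0 < d by rewrite invr_gt0 ltr0Sn.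
  pose P := [set y | mdist (u n) y < d /\ mdist (f (u n)) (f y) < d].
  have nP : nbhs (u n) P.
    have h1 : \forall t \near u n, mdist (f (u n)) (f t) < d.
      exact: (@cvgr_dist_lt _ _ _ (nbhs (u n)) _ f (f (u n)) (Hc (u n)) d d0).
    have h2 := @nbhsx_ballx _ _ (u n) d d0; rewrite ballEmdist in h2.
    by apply: filterS (filterI h2 h1) => y [].
  have [y [Oy [v _ vy]]] := Hdense (interior P) (ex_intro _ (u n) nP) (@open_interior _ P).
  by exists v; rewrite vy; exact: interior_subset Oy.
have [v Hv'] := choice Hv.
have Hvc : cauchy (v @ \oo).
  apply/cauchy_seqP => e e0.
  have [N1 HN1] := Hu (e / 3) (divr_gt0 e0 (ltr0Sn _ 2)).
  have [N2 HN2] := inv_small (divr_gt0 e0 (ltr0Sn _ 2)).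
  exists (maxn N1 N2) => m n Nm Nn.
  rewrite -Hiso (le_lt_trans (tri3 _ (u m) (u n) _)) //.
  have a1 := HN1 m n (leq_trans (leq_maxl _ _) Nm) (leq_trans (leq_maxl _ _) Nn).
  have a2 := HN2 m (leq_trans (leq_maxr _ _) Nm).
  have a3 := HN2 n (leq_trans (leq_maxr _ _) Nn).
  have b2 := (proj1 (Hv' m)); have b3 := (proj1 (Hv' n)).
  rewrite metric_sym in b2.
  apply: (@lt_le_trans _ _ (e / 3 + e / 3 + e / 3)); last by lra. rewrite ltrD //; last exact: lt_trans b3 a3. by rewrite ltrD //; exact: lt_trans b2 a2.
have /cauchy_seqP Hfv := Hcc v Hvc.
apply/cauchy_seqP => e e0.
have [N1 HN1] := Hfv (e / 3) (divr_gt0 e0 (ltr0Sn _ 2)).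
have [N2 HN2] := inv_small (divr_gt0 e0 (ltr0Sn _ 2)).
exists (maxn N1 N2) => m n Nm Nn /=.
rewrite (le_lt_trans (tri3 _ (f (iota (v m))) (f (iota (v n))) _)) //.
have a1 := HN1 m n (leq_trans (leq_maxl _ _) Nm) (leq_trans (leq_maxl _ _) Nn).
have a2 := HN2 m (leq_trans (leq_maxr _ _) Nm).
have a3 := HN2 n (leq_trans (leq_maxr _ _) Nn).
have b2 := (proj2 (Hv' m)); have b3 := (proj2 (Hv' n)).
rewrite metric_sym in b3.
simpl in a1.
apply: (@lt_le_trans _ _ (e / 3 + e / 3 + e / 3)); last by lra. rewrite ltrD //; last exact: lt_trans b3 a3. by rewrite ltrD //; exact: lt_trans b2 a2.
Qed.
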